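(* Let $m,n\ge2$ be integers with $(m-1)(n-1)$ even. Then the rectangular grid graph $\mathcal R_{(m-1)\times(n-1)}$ (with either proper black/white coloring) satisfies \[|\mathcal{C}_B(\mathcal R_{(m-1)\times(n-1)})|=2^{(\gcd(m,n)-1)/2}.\]
   Context: $\mathcal R_{a\times b}$ is the graph with vertex set $\{1,\dots,b\}\times\{1,\dots,a\}\subset\mathbf{Z}^2$ and edges between vertices at Euclidean distance $1$. A channel of a graph is a vertex set $C$ such that every vertex is adjacent to an even number of vertices of $C$ (the empty set included). For a bipartite graph with black/white coloring, $\mathcal{C}_B$ denotes the set of channels consisting only of black vertices. *)

(* Defs.v *)
From mathcomp Require Import all_boot.
Set Implicit Arguments. Unset Strict Implicit. Unset Printing Implicit Defensive.

(* Vertices of R_{a x b}: pairs (x, y) with x in {1..b}, y in {1..a},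
   represented 0-indexed as 'I_b * 'I_a (x-1, y-1). *)
Definition gvert (a b : nat) := ('I_b * 'I_a)%type.

Definition grid_adj (a b : nat) : rel (gvert a b) :=
  fun u v =>
    ((u.2 == v.2) && (((u.1 : nat).+1 == v.1) || ((v.1 : nat).+1 == u.1)))
 || ((u.1 == v.1) && (((u.2 : nat).+1 == v.2) || ((v.2 : nat).+1 == u.2))).

Definition channel (a b : nat) (C : {set gvert a b}) : bool :=
  [forall v : gvert a b, ~~ odd #|[set w in C | grid_adj v w]|].

(* Proper black/white coloring; p selects which of the two colorings:
   v is black iff the parity of x+y equals p (0-indexing shifts x+y by 2,
   so parity is the same as in 1-indexed coordinates). *)
Definition black (a b : nat) (p : bool) (v : gvert a b) : bool :=
  odd (v.1 + v.2) == p.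

Definition chanB (a b : nat) (p : bool) : {set {set gvert a b}} :=
  [set C : {set gvert a b} | channel C && (C \subset [set v | black p v])].

(* Main.v *)
Require Import Defs.
From mathcomp Require Import all_boot all_order all_algebra zify.
Set Implicit Arguments. Unset Strict Implicit. Unset Printing Implicit Defensive.
Import Order.TTheory GRing.Theory Num.Theory.

Lemma adj_split (a1 b1 a2 b2 : nat) :
  nat_of_bool (((a2 == b2) && ((a1.+1 == b1) || (b1.+1 == a1)))
   || ((a1 == b1) && ((a2.+1 == b2) || (b2.+1 == a2)))) =
  ((b2 == a2) && (a1.+1 == b1)) + ((b2 == a2) && (b1.+1 == a1))
  + ((b1 == a1) && (a2.+1 == b2)) + ((b1 == a1) && (b2.+1 == a2)).
Proof. by do ! case: eqP => //=; lia. Qed.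

Definition ind a b (C : {set gvert a b}) (X Y : int) : bool :=
  [exists w : gvert a b, (w \in C) && (((w.1 : nat)%:Z + 1 == X)%R && ((w.2 : nat)%:Z + 1 == Y)%R)].

Lemma sum_uniq (T : finType) (P : pred T) :
  (forall x y, P x -> P y -> x = y) ->
  \sum_(w : T) nat_of_bool (P w) = nat_of_bool [exists w, P w].
Proof.
move=> uP; case: existsP => [[w0 Pw0]|nP].
  rewrite (bigD1 w0) //= Pw0 big1 ?addn0 // => w nw.
  by case Pw: (P w) => //; case/eqP: nw; exact: uP.
by rewrite big1 // => w _; case Pw: (P w) => //; case: nP; exists w.
Qed.

Lemma nb_parity a b (C : {set gvert a b}) (v : gvert a b) :
  odd #|[set w in C | grid_adj v w]| =
  ind C ((v.1 : nat)%:Z + 1 + 1)%R ((v.2 : nat)%:Z + 1)%R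
  (+) ind C ((v.1 : nat)%:Z + 1 - 1)%R ((v.2 : nat)%:Z + 1)%R
  (+) ind C ((v.1 : nat)%:Z + 1)%R ((v.2 : nat)%:Z + 1 + 1)%R
  (+) ind C ((v.1 : nat)%:Z + 1)%R ((v.2 : nat)%:Z + 1 - 1)%R.
Proof.
rewrite -sum1_card big_mkcond /=.
rewrite (eq_bigr (fun w =>
  ((w \in C) && ((val w.2 == val v.2) && ((val v.1).+1 == val w.1)))
  + ((w \in C) && ((val w.2 == val v.2) && ((val w.1).+1 == val v.1)))
  + ((w \in C) && ((val w.1 == val v.1) && ((val v.2).+1 == val w.2)))
  + ((w \in C) && ((val w.1 == val v.1) && ((val w.2).+1 == val v.2))))%N); last first.
  by move=> w _; rewrite inE; case: (w \in C) => //=; exact: adj_split.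
rewrite !big_split /= !sum_uniq; last first.
- by move=> [x1 x2] [y1 y2] /and3P[_ /eqP h1 /eqP h2] /and3P[_ /eqP h3 /eqP h4];
     congr pair; apply: val_inj; simpl in *; lia.
- by move=> [x1 x2] [y1 y2] /and3P[_ /eqP h1 /eqP h2] /and3P[_ /eqP h3 /eqP h4];
     congr pair; apply: val_inj; simpl in *; lia.
- by move=> [x1 x2] [y1 y2] /and3P[_ /eqP h1 /eqP h2] /and3P[_ /eqP h3 /eqP h4];
     congr pair; apply: val_inj; simpl in *; lia.
- by move=> [x1 x2] [y1 y2] /and3P[_ /eqP h1 /eqP h2] /and3P[_ /eqP h3 /eqP h4];
     congr pair; apply: val_inj; simpl in *; lia.
rewrite !oddD !oddb /ind.
congr (_ (+) _ (+) _ (+) _); apply: eq_existsb => w; congr (_ && _);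
  by apply/idP/idP => /andP[/eqP h1 /eqP h2]; apply/andP; split; apply/eqP; lia.
Qed.
Local Open Scope ring_scope.

Definition red (P : nat) (z : int) : nat :=
  let u := absz (z %% (2 * P)%N%:Z)%Z in if (u <= P)%N then u else (2 * P - u)%N.

Lemma red_le P z : (red P z <= P)%N.
Proof. rewrite /red; case: ifP => h; lia. Qed.

Lemma red_id P z : (0 < P)%N -> 0 <= z <= P%:Z -> (red P z)%:Z = z.
Proof.
move=> P0 /andP[h1 h2]; rewrite /red modz_small; last by apply/andP; split; lia.
case: ifP => h; lia.
Qed.

Lemma per_mul (G : int -> bool) (Q : int) :
  (forall z, G (z + Q) = G z) -> forall q z, G (z + q * Q) = G z.
Proof.
move=> hG q z; case: q => k.
  elim: k z => [|k IH] z; first by rewrite mul0r addr0.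
  have -> : Posz k.+1 * Q = Posz k * Q + Q by lia.
by rewrite addrA hG IH.
elim: k z => [|k IH] z.
  by rewrite NegzE mulN1r -{1}(hG (z - Q)) subrK.
have -> : Negz k.+1 * Q = Negz k * Q - Q by rewrite !NegzE; lia.
by rewrite addrA -{1}(hG (z + _ - Q)) subrK IH.
Qed.

Lemma reduce (G : int -> bool) (P : nat) :
  (0 < P)%N -> (forall z, G (- z) = G z) ->
  (forall z, G (z + (2 * P)%N%:Z) = G z) -> forall z, G z = G (red P z).
Proof.
move=> P0 ev per z.
have e : z = (z %% (2 * P)%N%:Z)%Z + (z %/ (2 * P)%N%:Z)%Z * (2 * P)%N%:Z by lia.
rewrite {1}e per_mul // /red.
have h0 : 0 <= (z %% (2 * P)%N%:Z)%Z by apply: modz_ge0; lia.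
have h1 : (z %% (2 * P)%N%:Z)%Z < (2 * P)%N%:Z by apply: ltz_pmod; lia.
case: ifP => h.
  by congr G; lia.
rewrite -(per_mul per (-1) (z %% _)%Z) -ev.
by congr G; lia.
Qed.

Lemma red_odd P z : (0 < P)%N -> odd (red P z) = odd (absz z).
Proof.
move=> P0; rewrite (@reduce (fun z => odd (absz z)) P P0 _ _ z) //.
- by move=> x; rewrite abszN.
- move=> x; lia.
Qed.

Definition Fint (G : int -> bool) (X Y : int) := G (X + Y) (+) G (X - Y).

Definition relF (F : int -> int -> bool) (X Y : int) :=
  F (X + 1) Y (+) F (X - 1) Y (+) F X (Y + 1) (+) F X (Y - 1).

Lemma Fint_rel G X Y : relF (Fint G) X Y = false.
Proof.
rewrite /relF /Fint.
have -> : X + 1 + Y = X + Y + 1 by lia.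
have -> : X + 1 - Y = X - Y + 1 by lia.
have -> : X - 1 + Y = X + Y - 1 by lia.
have -> : X - 1 - Y = X - Y - 1 by lia.
have -> : X + (Y + 1) = X + Y + 1 by lia.
have -> : X - (Y + 1) = X - Y - 1 by lia.
have -> : X + (Y - 1) = X + Y - 1 by lia.
have -> : X - (Y - 1) = X - Y + 1 by lia.
by case: (G (X + Y + 1)); case: (G (X - Y + 1)); case: (G (X + Y - 1));
  case: (G (X - Y - 1)).
Qed.

Lemma Fint_X0 G : (forall z, G (- z) = G z) -> forall Y, Fint G 0 Y = false.
Proof. by move=> ev Y; rewrite /Fint add0r sub0r ev addbb. Qed.

Lemma Fint_Y0 G X : Fint G X 0 = false.
Proof. rewrite /Fint. have -> : X - 0 = X + 0 by lia. by rewrite addbb. Qed.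

Lemma Fint_Xn G (N : int) : (forall z, G (- z) = G z) ->
  (forall z, G (z + 2 * N) = G z) -> forall Y, Fint G N Y = false.
Proof.
move=> ev per Y; rewrite /Fint -(ev (N - Y)) -(per (- (N - Y))).
have -> : - (N - Y) + 2 * N = N + Y by lia.
by rewrite addbb.
Qed.

Lemma Fint_Ym G (M : int) :
  (forall z, G (z + 2 * M) = G z) -> forall X, Fint G X M = false.
Proof.
move=> per X; rewrite /Fint -(per (X - M)).
have -> : X - M + 2 * M = X + M by lia.
by rewrite addbb.
Qed.

Lemma uniq_rows (F1 F2 : int -> int -> bool) (n M : nat) :
  (forall X Y, 1 <= X <= n%:Z - 1 -> 1 <= Y <= M%:Z - 1 -> relF F1 X Y = false) ->
  (forall X Y, 1 <= X <= n%:Z - 1 -> 1 <= Y <= M%:Z - 1 -> relF F2 X Y = false) ->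
  (forall Y, F1 0 Y = false) -> (forall Y, F1 n%:Z Y = false) ->
  (forall Y, F2 0 Y = false) -> (forall Y, F2 n%:Z Y = false) ->
  (forall X, 0 <= X <= n%:Z -> F1 X 0 = F2 X 0) ->
  (forall X, 0 <= X <= n%:Z -> F1 X 1 = F2 X 1) ->
  (1 <= M)%N ->
  forall X Y, 0 <= X <= n%:Z -> 0 <= Y <= M%:Z -> F1 X Y = F2 X Y.
Proof.
move=> r1 r2 a0 an b0 bn e0 e1 M1.
have key : forall k : nat, (k + 1 <= M)%N -> forall X, 0 <= X <= n%:Z ->
    F1 X k%:Z = F2 X k%:Z /\ F1 X (k%:Z + 1) = F2 X (k%:Z + 1).
  elim=> [|k IH] hk X hX; first by split; [exact: e0|exact: e1].
  have IHk := IH ltac:(lia).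
  have -> : (k.+1)%:Z = k%:Z + 1 by lia.
  split; first exact: (proj2 (IHk X hX)).
  have [hx0|hx0] := boolP (X == 0); first by rewrite (eqP hx0) a0 b0.
  have [hxn|hxn] := boolP (X == n%:Z); first by rewrite (eqP hxn) an bn.
  have hr1 := r1 X (k%:Z + 1) ltac:(lia) ltac:(lia).
  have hr2 := r2 X (k%:Z + 1) ltac:(lia) ltac:(lia).
  move: hr1 hr2; rewrite /relF addrK.
  rewrite (proj2 (IHk (X + 1) ltac:(lia))).
  rewrite (proj2 (IHk (X - 1) ltac:(lia))) (proj1 (IHk X hX)).
  case: (F1 X (k%:Z + 1 + 1)); case: (F2 X (k%:Z + 1 + 1));
  case: (F2 (X + 1) (k%:Z + 1)); case: (F2 (X - 1) (k%:Z + 1));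
    by case: (F2 X k%:Z).
move=> X Y hX hY.
have [hy0|hy0] := boolP (Y == 0).
  by rewrite (eqP hy0); exact: (proj1 (key 0%N ltac:(lia) X hX)).
have -> : Y = (absz Y - 1)%N%:Z + 1 by lia.
exact: (proj2 (key (absz Y - 1)%N ltac:(lia) X hX)).
Qed.

Lemma red_per P z : red P (z + (2 * P)%N%:Z) = red P z.
Proof. by rewrite /red modzDr. Qed.

Lemma red_even P z : (0 < P)%N -> red P (- z) = red P z.
Proof.
move=> P0.
have h0 : 0 <= (z %% (2 * P)%N%:Z)%Z by apply: modz_ge0; lia.
have h1 : (z %% (2 * P)%N%:Z)%Z < (2 * P)%N%:Z by apply: ltz_pmod; lia.
rewrite /red -modzNm -(modzDr (- (z %% (2 * P)%N%:Z)%Z) (2 * P)%N%:Z).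
have [e|ne] := eqVneq (z %% (2 * P)%N%:Z)%Z 0.
  by rewrite e oppr0 add0r modzz.
rewrite modz_small; last by apply/andP; split; lia.
case: ifP => h; case: ifP => h'; lia.
Qed.

Definition Gam (p : bool) (d k : nat) (t : {ffun 'I_k -> bool}) (z : int) : bool :=
  (odd (red d z) == p) && [exists i : 'I_k, (val i == (red d z)./2) && t i].
Arguments Gam : clear implicits.

Lemma Gam_even p d k t z : (0 < d)%N -> Gam p d k t (- z) = Gam p d k t z.
Proof. by move=> d0; rewrite /Gam red_even. Qed.

Lemma Gam_per p d k t z : Gam p d k t (z + (2 * d)%N%:Z) = Gam p d k t z.
Proof. by rewrite /Gam red_per. Qed.

Definition Ct (a b : nat) (G : int -> bool) : {set gvert a b} :=
  [set v : gvert a b | Fint G ((v.1 : nat)%:Z + 1) ((v.2 : nat)%:Z + 1)].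

Lemma ind_set a b (P : int -> int -> bool) X Y :
  ind [set v : gvert a b | P ((v.1 : nat)%:Z + 1) ((v.2 : nat)%:Z + 1)] X Y =
  [&& 1 <= X, X <= b%:Z, 1 <= Y, Y <= a%:Z & P X Y].
Proof.
apply/existsP/idP.
  move=> [[x y] /andP[]]; rewrite inE /= => hP /andP[/eqP <- /eqP <-].
  move: (ltn_ord x) (ltn_ord y) => hx hy.
  rewrite hP andbT; apply/and4P; split; lia.
move=> /and5P[h1 h2 h3 h4 hP].
have hx : (absz (X - 1) < b)%N by lia.
have hy : (absz (Y - 1) < a)%N by lia.
exists (Ordinal hx, Ordinal hy); rewrite inE /=.
have -> : (absz (X - 1))%:Z + 1 = X by lia.
have -> : (absz (Y - 1))%:Z + 1 = Y by lia.
by rewrite hP !eqxx.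
Qed.

Lemma ind_in a b (C : {set gvert a b}) (v : gvert a b) :
  ind C ((v.1 : nat)%:Z + 1) ((v.2 : nat)%:Z + 1) = (v \in C).
Proof.
apply/existsP/idP; last by move=> vC; exists v; rewrite vC !eqxx.
move=> [[x y] /andP[xC /andP[/eqP e1 /eqP e2]]].
have -> : v = (x, y); last by [].
by case: v e1 e2 => v1 v2 /= e1 e2; congr pair; apply: val_inj; simpl in *; lia.
Qed.

Lemma ind_range a b (C : {set gvert a b}) X Y :
  ind C X Y -> [/\ 1 <= X, X <= b%:Z, 1 <= Y & Y <= a%:Z].
Proof.
move=> /existsP[[x y] /andP[_ /andP[/eqP <- /eqP <-]]].
by move: (ltn_ord x) (ltn_ord y) => hx hy /=; split; lia.
Qed.

Lemma ind_Fint_box a b G X Y :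
  (forall z, G (- z) = G z) ->
  (forall z, G (z + 2 * (b%:Z + 1)) = G z) ->
  (forall z, G (z + 2 * (a%:Z + 1)) = G z) ->
  0 <= X <= b%:Z + 1 -> 0 <= Y <= a%:Z + 1 ->
  ind (Ct a b G) X Y = Fint G X Y.
Proof.
move=> ev pn pm hX hY; rewrite /Ct ind_set.
have [e|ne] := eqVneq X 0; first by rewrite e Fint_X0.
have [e|ne'] := eqVneq X (b%:Z + 1); first by rewrite e (Fint_Xn ev pn) !andbF.
have [e|ne''] := eqVneq Y 0; first by rewrite e Fint_Y0 !andbF.
have [e|ne'''] := eqVneq Y (a%:Z + 1); first by rewrite e (Fint_Ym pm) !andbF.
have h1 : 1 <= X by lia.
have h2 : X <= b%:Z by lia.
have h3 : 1 <= Y by lia.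
have h4 : Y <= a%:Z by lia.
by rewrite h1 h2 h3 h4.
Qed.

Lemma channel_Ct a b G :
  (forall z, G (- z) = G z) ->
  (forall z, G (z + 2 * (b%:Z + 1)) = G z) ->
  (forall z, G (z + 2 * (a%:Z + 1)) = G z) ->
  channel (Ct a b G).
Proof.
move=> ev pn pm; apply/forallP => v; rewrite nb_parity.
move: (ltn_ord v.1) (ltn_ord v.2) => h1 h2.
rewrite !ind_Fint_box //; first by
  have := Fint_rel G ((v.1 : nat)%:Z + 1) ((v.2 : nat)%:Z + 1); rewrite /relF => ->.
all: apply/andP; split; simpl in *; lia.
Qed.

Lemma Ct_black a b p d k t : (0 < d)%N ->
  Ct a b (Gam p d k t) \subset [set v | black p v].
Proof.
move=> d0; apply/subsetP => v; rewrite !inE /Fint /black.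
set X := (v.1 : nat)%:Z + 1; set Y := (v.2 : nat)%:Z + 1.
have e1 : odd (absz (X + Y)) = odd (v.1 + v.2) by rewrite /X /Y; lia.
have e2 : odd (absz (X - Y)) = odd (v.1 + v.2) by rewrite /X /Y; lia.
rewrite /Gam !red_odd // e1 e2.
by case: (odd (v.1 + v.2) == p).
Qed.

Lemma Gam_at (p : bool) (d k : nat) (t : {ffun 'I_k -> bool}) (i : nat) : (0 < d)%N -> (p + 2 * i <= d)%N ->
  Gam p d k t (p + 2 * i)%N%:Z = [exists i' : 'I_k, (val i' == i) && t i'].
Proof.
move=> d0 h.
have r : red d (p + 2 * i)%N%:Z = (p + 2 * i)%N.
  by have := @red_id d (p + 2 * i)%N%:Z d0 ltac:(apply/andP; split; lia); lia.
rewrite /Gam r.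
have -> : odd (p + 2 * i) = p by case: p {h r}; lia.
have -> : (p + 2 * i)./2 = i by case: p {h r}; lia.
by rewrite eqxx.
Qed.

Lemma ex_ord k (t : {ffun 'I_k -> bool}) (i : 'I_k) :
  [exists i' : 'I_k, (val i' == val i) && t i'] = t i.
Proof.
apply/existsP/idP; last by move=> ti; exists i; rewrite eqxx.
by move=> [i' /andP[/eqP e ti']]; have <- : i' = i by apply: val_inj.
Qed.

Lemma ex_ord_k k (t : {ffun 'I_k -> bool}) :
  [exists i' : 'I_k, (val i' == k) && t i'] = false.
Proof.
apply/negbTE/existsP => -[i' /andP[/eqP e _]]; have := ltn_ord i'; simpl in *; lia.
Qed.

Lemma Gam_inj a b (p : bool) (d k : nat) (t1 t2 : {ffun 'I_k -> bool}) :
  d = (2 * k + 1)%N -> (d <= b + 1)%N -> (1 <= a)%N ->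
  Ct a b (Gam p d k t1) = Ct a b (Gam p d k t2) -> t1 = t2.
Proof.
move=> dk db a1 eC.
have d0 : (0 < d)%N by lia.
have hrow : forall X, 1 <= X <= b%:Z ->
    Fint (Gam p d k t1) X 1 = Fint (Gam p d k t2) X 1.
  move=> X hX; have := congr1 (fun C => ind C X 1) eC; rewrite /= /Ct !ind_set.
  have h1 : 1 <= X by lia.
  have h2 : X <= b%:Z by lia.
  have h3 : (1 : int) <= a%:Z by lia.
  by rewrite h1 h2 h3 lexx.
set G1 := Gam p d k t1; set G2 := Gam p d k t2.
have step : forall j : nat, (p + 2 * j + 2 <= b + 1)%N ->
    G1 (p + 2 * j + 2)%N%:Z (+) G2 (p + 2 * j + 2)%N%:Z =
    G1 (p + 2 * j)%N%:Z (+) G2 (p + 2 * j)%N%:Z.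
  move=> j hj; have := hrow (p + 2 * j + 1)%N%:Z ltac:(apply/andP; split; lia).
  rewrite /Fint.
  have -> : (p + 2 * j + 1)%N%:Z + 1 = (p + 2 * j + 2)%N%:Z by lia.
  have -> : (p + 2 * j + 1)%N%:Z - 1 = (p + 2 * j)%N%:Z by lia.
  rewrite -/G1 -/G2.
  case: (G1 (p + 2 * j + 2)%N%:Z); case: (G2 (p + 2 * j + 2)%N%:Z);
  case: (G1 (p + 2 * j)%N%:Z); by case: (G2 (p + 2 * j)%N%:Z).
have chain : forall i j : nat, (i <= j)%N -> (p + 2 * j <= b + 1)%N ->
    G1 (p + 2 * i)%N%:Z (+) G2 (p + 2 * i)%N%:Z =
    G1 (p + 2 * j)%N%:Z (+) G2 (p + 2 * j)%N%:Z.
  move=> i; elim=> [|j IH] hij hj.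
    by have -> : i = 0%N by lia.
  have [e|ne] := eqVneq i j.+1; first by rewrite e.
  rewrite IH; [|lia|lia].
  have -> : (p + 2 * j.+1 = p + 2 * j + 2)%N by lia.
  by rewrite step //; lia.
have top : G1 (p + 2 * k)%N%:Z (+) G2 (p + 2 * k)%N%:Z = false.
  rewrite /G1 /G2 !Gam_at //; try lia.
  by rewrite !ex_ord_k.
apply/ffunP => i.
have := chain i k ltac:(have := ltn_ord i; lia) ltac:(lia).
rewrite top /G1 /G2 !Gam_at //; try (have := ltn_ord i; lia).
by rewrite !ex_ord; case: (t1 i); case: (t2 i).
Qed.

Lemma chan_rel a b (C : {set gvert a b}) X Y : channel C ->
  1 <= X <= b%:Z -> 1 <= Y <= a%:Z -> relF (ind C) X Y = false.
Proof.
move=> /forallP ch hX hY.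
have hx : (absz (X - 1) < b)%N by lia.
have hy : (absz (Y - 1) < a)%N by lia.
have := ch (Ordinal hx, Ordinal hy); rewrite nb_parity /=.
have -> : (absz (X - 1))%:Z + 1 = X by lia.
have -> : (absz (Y - 1))%:Z + 1 = Y by lia.
by rewrite /relF; case: (_ (+) _).
Qed.

Lemma ind_black a b p (C : {set gvert a b}) X Y :
  C \subset [set v | black p v] -> ind C X Y -> odd (absz (X + Y)) = p.
Proof.
move=> /subsetP sC /existsP[w /andP[wC /andP[/eqP <- /eqP <-]]].
have := sC w wC; rewrite inE /black => /eqP <-; lia.
Qed.

Fixpoint Gr (F : int -> int -> bool) (j : nat) : bool :=
  match j with
  | j'.+2 => F (Posz j'.+1) 1 (+) Gr F j'
  | _ => false
  end.

Lemma Gr_par (F : int -> int -> bool) (p : bool) :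
  (forall X Y, F X Y -> odd (absz (X + Y)) = p) ->
  forall j, Gr F j -> odd j = p.
Proof.
move=> hF.
suff : forall j, (Gr F j -> odd j = p) /\ (Gr F j.+1 -> odd j.+1 = p).
  by move=> h j; exact: (proj1 (h j)).
elim=> [|j [IH1 IH2]]; first by split.
split; first exact: IH2.
rewrite /=; case e: (F _ _) => /=.
  by move=> _; have := hF _ _ e; lia.
by move/IH1; rewrite /=; case: (odd j).
Qed.

Lemma ex_lt k (t : {ffun 'I_k -> bool}) (x : nat) (h : (x < k)%N) :
  [exists i' : 'I_k, (val i' == x) && t i'] = t (Ordinal h).
Proof. exact: (ex_ord t (Ordinal h)). Qed.

Lemma complete a b (p : bool) (C : {set gvert a b}) (d k : nat) :
  (1 <= a)%N -> (1 <= b)%N -> d = gcdn (a + 1) (b + 1) -> d = (2 * k + 1)%N ->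
  channel C -> C \subset [set v | black p v] ->
  exists t : {ffun 'I_k -> bool}, C = Ct a b (Gam p d k t).
Proof.
move=> a1 b1 ed dk ch bl.
set F := ind C.
set N := (b + 1)%N.
have N0 : (0 < N)%N by rewrite /N; lia.
have d0 : (0 < d)%N by lia.
set Gp := fun z => Gr F (red N z).
have ev : forall z, Gp (- z) = Gp z by move=> z; rewrite /Gp red_even.
have pn : forall z, Gp (z + (2 * N)%N%:Z) = Gp z by move=> z; rewrite /Gp red_per.
have pn' : forall z, Gp (z + 2 * (b%:Z + 1)) = Gp z.
  by move=> z; rewrite -[RHS]pn; congr Gp; rewrite /N; lia.
have Frange : forall X Y, F X Y -> [/\ 1 <= X, X <= b%:Z, 1 <= Y & Y <= a%:Z].
  by move=> X Y; exact: ind_range.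
have Fout : forall X Y, ~~ [&& 1 <= X, X <= b%:Z, 1 <= Y & Y <= a%:Z] -> F X Y = false.
  move=> X Y h; apply/negbTE/negP => /Frange [h1 h2 h3 h4].
  by move/negP: h; apply; rewrite h1 h2 h3 h4.
have agree : forall X Y, 0 <= X <= b%:Z + 1 -> 0 <= Y <= a%:Z + 1 ->
    F X Y = Fint Gp X Y.
  move=> X Y hX hY; apply: (@uniq_rows F (Fint Gp) N (a + 1)%N).
  - move=> X' Y' h1 h2; apply: chan_rel => //; apply/andP; split; rewrite /N in h1; lia.
  - by move=> *; exact: Fint_rel.
  - by move=> Y'; apply: Fout; apply/negP => /and4P[]; lia.
  - by move=> Y'; apply: Fout; apply/negP => /and4P[]; rewrite /N; lia.
  - exact: Fint_X0.
  - move=> Y'; apply: Fint_Xn => // z; rewrite -[RHS]pn; congr Gp; lia.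
  - by move=> X' _; rewrite Fint_Y0; apply: Fout; apply/negP => /and4P[]; lia.
  - move=> X' hX'.
    have [e|ne] := eqVneq X' 0.
      by rewrite e Fint_X0 //; apply: Fout; apply/negP => /and4P[]; lia.
    have [e|ne'] := eqVneq X' N%:Z.
      have pN : forall z, Gp (z + 2 * N%:Z) = Gp z.
        by move=> z; rewrite -[RHS]pn; congr Gp; lia.
      rewrite e (@Fint_Xn Gp N%:Z ev pN).
      by apply: Fout; apply/negP => /and4P[]; rewrite /N; lia.
    rewrite /Fint /Gp.
    have r1 : red N (X' + 1) = (absz (X' - 1)).+2.
      by have := @red_id N (X' + 1) N0 ltac:(apply/andP; split; lia); lia.
    have r2 : red N (X' - 1) = absz (X' - 1).
      by have := @red_id N (X' - 1) N0 ltac:(apply/andP; split; lia); lia.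
    rewrite r1 r2 /=.
    have -> : Posz (absz (X' - 1)).+1 = X' by lia.
    by case: (F X' 1); case: (Gr F _).
  - lia.
  - rewrite /N; apply/andP; split; lia.
  - apply/andP; split; lia.
pose M := a%:Z + 1.
have rowM : forall X, 0 <= X <= b%:Z + 1 -> Fint Gp X M = false.
  move=> X hX; rewrite -agree //; last by apply/andP; split; rewrite /M; lia.
  by apply: Fout; apply/negP => /and4P[]; rewrite /M; lia.
have sym : forall z, Gp (M + z) = Gp (M - z).
  pose h z := Gp (M + z) == Gp (M - z).
  suff H : forall z, h z by move=> z; apply/eqP; exact: H.
  move=> z; rewrite (@reduce h N N0 _ _ z).
  - have := rowM (red N z)%:Z ltac:(have := red_le N z; rewrite /N => ?; apply/andP; split; lia).
    rewrite /Fint /h.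
    have e1 : (red N z)%:Z + M = M + (red N z)%:Z by lia.
    have e2 : Gp ((red N z)%:Z - M) = Gp (M - (red N z)%:Z).
      by rewrite -ev; congr Gp; lia.
    rewrite e1 e2.
    by case: (Gp (M + (red N z)%:Z)); case: (Gp (M - (red N z)%:Z)).
  - by move=> x; rewrite /h opprK eq_sym.
  - move=> x; rewrite /h addrA pn -(pn (M - (x + (2 * N)%N%:Z))).
    by have -> : M - (x + (2 * N)%N%:Z) + (2 * N)%N%:Z = M - x by lia.
have pm : forall z, Gp (z + 2 * M) = Gp z.
  move=> z; have -> : z + 2 * M = M + (M + z) by lia.
  by rewrite sym; have -> : M - (M + z) = - z by lia; rewrite ev.
have pd : forall z, Gp (z + (2 * d)%N%:Z) = Gp z.
  move=> z; have [u [v huv]] := Bezoutz (a + 1)%N%:Z N%:Z.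
  have eg : gcdz (a + 1)%N%:Z N%:Z = d%:Z by rewrite ed.
  rewrite eg in huv.
  have -> : z + (2 * d)%N%:Z = z + v * (2 * N%:Z) + u * (2 * M) by rewrite /M; lia.
  rewrite (per_mul pm); apply: per_mul => y; rewrite -[RHS]pn; congr Gp; lia.
have redd : forall z, Gp z = Gp (red d z) by apply: reduce.
have par : forall z, Gp z -> odd (absz z) = p.
  move=> z; rewrite /Gp => /(Gr_par _) h.
  rewrite -(red_odd z N0); apply: h => X Y; exact: ind_black.
set c := Gp (p + 2 * k)%N%:Z.
exists [ffun i : 'I_k => Gp (p + 2 * i)%N%:Z (+) c].
have gam : forall z, Gam p d k [ffun i : 'I_k => Gp (p + 2 * i)%N%:Z (+) c] z =
    Gp z (+) (c && (odd (absz z) == p)).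
  move=> z; rewrite /Gam redd.
  have hj := red_le d z.
  set j := red d z.
  have [hp|hp] := eqVneq (odd (absz z)) p; last first.
    rewrite andbF addbF.
    have -> : (odd j == p) = false by rewrite /j red_odd //; exact/negbTE.
    have : Gp j%:Z = false.
      by apply/negbTE/negP => /par; rewrite absz_nat /j red_odd // => /eqP; rewrite (negbTE hp).
    by move=> ->.
  have oj : odd j = p by rewrite /j red_odd.
  rewrite oj eqxx andbT /=.
  have ej : j%:Z = (p + 2 * j./2)%N%:Z by case: (p) oj => oj; lia.
  have [lt|ge] := ltnP j./2 k.
    by rewrite ex_lt ffunE /= -ej; case: (Gp _); case: c.
  have ejk : j./2 = k by lia.
  rewrite ejk ex_ord_k ej ejk -/c.
  by case: c.
apply/setP => v; rewrite inE -ind_in -/F agree; first last.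
- by move: (ltn_ord v.2) => ?; apply/andP; split; simpl in *; lia.
- by move: (ltn_ord v.1) => ?; apply/andP; split; simpl in *; lia.
rewrite /Fint !gam.
have -> : odd (absz (((v.1 : nat)%:Z + 1 - ((v.2 : nat)%:Z + 1))%R)) =
          odd (absz (((v.1 : nat)%:Z + 1 + ((v.2 : nat)%:Z + 1))%R)) by lia.
by case: (c && _); case: (Gp _); case: (Gp _).
Qed.

Lemma Gam_perq p d k t (q : nat) z :
  Gam p d k t (z + 2 * (q * d)%N%:Z) = Gam p d k t z.
Proof.
have -> : 2 * (q * d)%N%:Z = q%:Z * (2 * d)%N%:Z by lia.
by apply: per_mul => y; exact: Gam_per.
Qed.

Local Close Scope ring_scope.

Theorem corollary4p8 (m n : nat) (hm : 2 <= m) (hn : 2 <= n)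
  (heven : ~~ odd ((m - 1) * (n - 1))) (p : bool) :
  #|chanB (m - 1) (n - 1) p| = 2 ^ ((gcdn m n - 1) %/ 2).
Proof.
set d := gcdn m n; set k := ((d - 1) %/ 2)%N.
have d0 : (0 < d)%N by rewrite /d gcdn_gt0; lia.
have dm : (d %| m)%N := dvdn_gcdl m n.
have dn : (d %| n)%N := dvdn_gcdr m n.
have dodd : odd d.
  apply/negPn/negP => hd.
  have h2 : (2 %| d)%N by rewrite dvdn2.
  have om : ~~ odd m by rewrite -dvdn2; exact: dvdn_trans h2 dm.
  have on : ~~ odd n by rewrite -dvdn2; exact: dvdn_trans h2 dn.
  by move: heven; rewrite oddM; lia.
have dk : d = (2 * k + 1)%N by rewrite /k; lia.
have dlen : (d <= n)%N by apply: dvdn_leq; lia.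
have eqm : (n %/ d * d)%N = n := divnK dn.
have eqm' : (m %/ d * d)%N = m := divnK dm.
pose f := fun t : {ffun 'I_k -> bool} => Ct (m - 1) (n - 1) (Gam p d k t).
have -> : chanB (m - 1) (n - 1) p = f @: [set: {ffun 'I_k -> bool}].
  apply/setP => C; rewrite /chanB inE; apply/andP/imsetP.
    move=> [ch bl].
    have [t ->] := @complete (m - 1) (n - 1) p C d k ltac:(lia) ltac:(lia)
      ltac:(rewrite /d; congr gcdn; lia) dk ch bl.
    by exists t.
  move=> [t _ ->]; split; last exact: Ct_black.
  apply: channel_Ct.
  - by move=> z; exact: Gam_even.
  - move=> z; have -> : (2 * ((n - 1)%N%:Z + 1) = 2 * ((n %/ d) * d)%N%:Z)%R by lia.
    exact: Gam_perq.
  - move=> z; have -> : (2 * ((m - 1)%N%:Z + 1) = 2 * ((m %/ d) * d)%N%:Z)%R by lia.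
    exact: Gam_perq.
rewrite card_imset; last first.
  move=> t1 t2; apply: (@Gam_inj (m - 1) (n - 1) p d k t1 t2 dk); lia.
by rewrite cardsT card_ffun card_bool card_ord.
Qed.
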